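(* Let $\Gamma$ be a Deza graph with parameters $(n,k,k-1,a)$, $k>1$, $\beta=1$. Let $x$ be an $NA$-vertex and $y$ an $A$-vertex. Then (1) if $x$ and $y$ are adjacent, then $y$ and $y_b$ both lie in $N(x,x')$; (2) either all possible edges between $\{x,x',x_b,x_b'\}$ and $\{y,y_b\}$ are present, or there are no such edges.
   Context: A Deza graph with parameters $(n,k,b,a)$, $a\le b$, is a $k$-regular graph on $n$ vertices in which any two distinct vertices have $a$ or $b$ common neighbours; $\beta$ is the number of vertices $u\ne v$ with exactly $b$ common neighbours with a given vertex $v$. Since $\beta=1$, for each vertex $x$ let $x_b$ denote the unique vertex having $b=k-1$ common neighbours with $x$. A vertex $x$ is an $A$-vertex if $x$ is adjacent to $x_b$, and an $NA$-vertex otherwise. $N(x,y)$ is the set of common neighbours of $x$ and $y$. For an $NA$-vertex $x$, $x'$ denotes the unique neighbour of $x$ not adjacent to $x_b$, and $x_b'=(x')_b=(x_b)'$. *)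

(* Defs.v *)
From mathcomp Require Import all_boot.
Set Implicit Arguments. Unset Strict Implicit. Unset Printing Implicit Defensive.

(* A simple graph on a finite vertex type T is a symmetric irreflexive relation e. *)

Definition ncommon (T : finType) (e : rel T) (x y : T) : nat :=
  #|[set z | e x z && e y z]|.

Definition deza_graph (T : finType) (e : rel T) (n k b a : nat) : Prop :=
  [/\ symmetric e /\ irreflexive e, #|T| = n, a <= b,
      forall x : T, #|[set y | e x y]| = k
    & forall x y : T, x != y -> ncommon e x y = a \/ ncommon e x y = b].

Definition beta_eq (T : finType) (e : rel T) (b beta : nat) : Prop :=
  forall v : T, #|[set u | (u != v) && (ncommon e v u == b)]| = beta.

(* Main.v *)
Require Import Defs.
From mathcomp Require Import all_boot.
From mathcomp Require Import zify.

Theorem lemma18 (T : finType) (e : rel T) (n k a : nat)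
  (hD : deza_graph e n k k.-1 a) (hk : 1 < k) (hbeta : beta_eq e k.-1 1)
  (x xb x' xb' y yb : T)
  (* xb = x_b, the unique vertex with k-1 common neighbours with x *)
  (hxb : xb != x) (hxbc : ncommon e x xb = k.-1)
  (* x is an NA-vertex *)
  (hNA : ~~ e x xb)
  (* x' = the unique neighbour of x not adjacent to x_b *)
  (hx' : e x x') (hx'b : ~~ e xb x')
  (* xb' = x_b' = (x')_b *)
  (hxb' : xb' != x') (hxb'c : ncommon e x' xb' = k.-1)
  (* yb = y_b *)
  (hyb : yb != y) (hybc : ncommon e y yb = k.-1)
  (* y is an A-vertex *)
  (hA : e y yb) :
  (e x y -> [/\ e x y, e x' y, e x yb & e x' yb]) /\
  ((forall u v, u \in [:: x; x'; xb; xb'] -> v \in [:: y; yb] -> u != v -> e u v) \/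
   (forall u v, u \in [:: x; x'; xb; xb'] -> v \in [:: y; yb] -> ~~ e u v)).
Proof.
case: hD => [[esym eirr] _ hale hdeg hval].
have eneq : forall u v, e u v -> u != v.
  by move=> u v huv; apply/eqP => E; move: huv; rewrite E eirr.
have ncE : forall u v, ncommon e u v = \sum_z ((e u z && e v z) : nat).
  move=> u v; rewrite /ncommon -sum1_card big_mkcond /=.
  by apply eq_bigr => z _; rewrite inE; case: (_ && _).
have ncC : forall u v, ncommon e u v = ncommon e v u.
  by move=> u v; rewrite /ncommon; apply: eq_card => z; rewrite !inE andbC.
have ncdiag : forall u, ncommon e u u = k.
  by move=> u; rewrite /ncommon -(hdeg u); apply: eq_card => z; rewrite !inE andbb.
have degE : forall u, \sum_z (e u z : nat) = k.
  move=> u; rewrite -(hdeg u) -sum1_card [RHS]big_mkcond /=.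
  by apply eq_bigr => z _; rewrite inE; case: (e u z).
have puniq : forall v u w, u != v -> w != v -> ncommon e v u = k.-1 ->
    ncommon e v w = k.-1 -> u = w.
  move=> v u w hu hw cu cw; have /eqP/cards1P [c Hc] := hbeta v.
  have : u \in [set u | (u != v) && (ncommon e v u == k.-1)] by rewrite inE hu cu eqxx.
  have : w \in [set u | (u != v) && (ncommon e v u == k.-1)] by rewrite inE hw cw eqxx.
  by rewrite Hc !inE => /eqP -> /eqP ->.
pose p v := odflt v [pick u | (u != v) && (ncommon e v u == k.-1)].
have pP : forall v, p v != v /\ ncommon e v (p v) = k.-1.
  move=> v; rewrite /p; case: pickP => [u /andP [h1 /eqP h2]|H] //=.
  have /eqP/cards1P [c Hc] := hbeta v.
  have : c \in [set u | (u != v) && (ncommon e v u == k.-1)] by rewrite Hc set11.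
  by rewrite inE H.
have pU : forall v u, u != v -> ncommon e v u = k.-1 -> u = p v.
  by move=> v u hu cu; case: (pP v) => h1 h2; apply: (puniq v).
have ppv : forall v, p (p v) = v.
  move=> v; case: (pP v) => h1 h2; symmetry; apply: pU; first by rewrite eq_sym.
  by rewrite ncC.
have pinj : forall u v, p u = p v -> u = v.
  by move=> u v E; rewrite -(ppv u) E ppv.
have hval' : forall u v, u != v -> v != p u -> ncommon e u v = a.
  move=> u v h1 h2; case: (hval u v h1) => // H; case/eqP: h2; apply: pU => //.
  by rewrite eq_sym.
have altb : a < k.-1.
  rewrite ltn_neqAle hale andbT; apply/eqP => ea.
  have xx' : x' != x by rewrite eq_sym eneq.
  have c1 : ncommon e x x' = k.-1 by case: (hval x x' (eneq _ _ hx')) => // ->.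
  have E1 := pU x x' xx' c1; have E2 := pU x xb hxb hxbc.
  by move: hNA; rewrite E2 -E1 hx'.
have key : forall u v, \sum_z e u z * ncommon e z v =
    a * k + (k - a) * e u v + (k.-1 - a) * e u (p v).
  move=> u v; case: (pP v) => pv1 pv2.
  have H : forall z, ncommon e z v = a + (k - a) * (z == v) + (k.-1 - a) * (z == p v).
    move=> z; case: (eqVneq z v) => [->|zv].
      rewrite ncdiag (eq_sym v (p v)) (negbTE pv1) /=; clear -altb; lia.
    case: (eqVneq z (p v)) => [->|zpv].
      rewrite ncC pv2 /=; clear -altb; lia.
    rewrite ncC hval' /=; [clear; lia | by rewrite eq_sym | by []].
  rewrite (eq_bigr (fun z => a * e u z + (k - a) * (e u z * (z == v)) +
                    (k.-1 - a) * (e u z * (z == p v)))); last first.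
    move=> z _; rewrite H; case: (e u z); case: (z == v); case: (z == p v); clear -altb; lia.
  rewrite !big_split /= -!big_distrr /= degE.
  have s1 : forall w, \sum_z e u z * (z == w) = e u w.
    move=> w; rewrite (bigD1 w) //= eqxx muln1 big1 ?addn0 // => z /negbTE ->.
    by rewrite muln0.
  by rewrite !s1.
have walk : forall u v, \sum_z e u z * ncommon e z v = \sum_w e v w * ncommon e w u.
  move=> u v.
  transitivity (\sum_z \sum_w (e u z * e z w * e v w)).
    apply eq_bigr => z _; rewrite ncE big_distrr /=; apply eq_bigr => w _.
    by case: (e u z); case: (e z w); case: (e v w).
  rewrite exchange_big /=; apply eq_bigr => w _; rewrite ncE big_distrr /=.
  apply eq_bigr => z _; rewrite (esym z w).
  by case: (e u z); case: (e w z); case: (e v w).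
have aut : forall u v, e u (p v) = e (p u) v.
  move=> u v; have := walk u v; rewrite key key (esym v u) (esym v (p u)).
  have := altb; case: (e u (p v)); case: (e (p u) v); case: (e u v) => //=; clear -altb; lia.
have strct : forall v w z, e v w -> ~~ e (p v) w -> e v z -> z != w -> e (p v) z.
  move=> v w z hvw hpw hvz hzw.
  have sub : [set t | e v t && e (p v) t] \subset [set t | e v t] :\ w.
    apply/subsetP => t; rewrite !inE => /andP [h1 h2]; rewrite h1 andbT.
    by apply/eqP => E; move: hpw; rewrite -E h2.
  have : [set t | e v t && e (p v) t] == [set t | e v t] :\ w.
    rewrite eqEcard sub /=.
    have c1 := cardsD1 w [set t | e v t]; rewrite inE hvw hdeg in c1.
    have c2 : #|[set t | e v t && e (p v) t]| = k.-1 by case: (pP v).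
    rewrite c2; clear -c1; lia.
  move/eqP => E; have : z \in [set t | e v t] :\ w by rewrite !inE hzw hvz.
  by rewrite -E inE => /andP [].
have par : forall Z : {set T}, (forall z, z \in Z -> p z \in Z) -> ~~ odd #|Z|.
  have : forall m (Z : {set T}), #|Z| <= m -> (forall z, z \in Z -> p z \in Z) ->
      ~~ odd #|Z|.
    elim => [|m IH] Z hZ cl; first by move: hZ; rewrite leqn0 => /eqP ->.
    case: (set_0Vmem Z) => [->|[z zZ]]; first by rewrite cards0.
    have pzZ : p z \in Z :\ z.
      by rewrite !inE cl // andbT; case: (pP z).
    have c1 := cardsD1 z Z; have c2 := cardsD1 (p z) (Z :\ z).
    rewrite zZ in c1; rewrite pzZ in c2.
    have cl' : forall t, t \in Z :\ z :\ p z -> p t \in Z :\ z :\ p z.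
      move=> t; rewrite !inE => /and3P [h1 h2 h3]; rewrite cl // andbT.
      apply/andP; split.
        by apply/negP => /eqP E; case/negP: h2; apply/eqP; apply: pinj.
      by apply/negP => /eqP E; case/negP: h1; apply/eqP; rewrite -E ppv.
    have := IH (Z :\ z :\ p z) ltac:(clear -hZ c1 c2; lia) cl'.
    have -> : #|Z| = (#|Z :\ z :\ p z|).+2 by clear -c1 c2; lia.
    by rewrite /= negbK.
  by move=> H Z; apply: H.
have M : forall u u' y, ~~ e u (p u) -> e u u' -> ~~ e (p u) u' -> e y (p y) ->
    e u y -> e u' y.
  move=> u u' y0 hu huu' hpu hy huy; apply/negPn/negP => nu'y.
  have hpu' : ~~ e (p u') u by rewrite -aut esym.
  pose Z1 := [set z | e u z && e u' z].
  have cl1 : forall z, z \in Z1 -> p z \in Z1.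
    move=> z; rewrite !inE => /andP [h1 h2]; rewrite aut aut.
    rewrite (strct u u' z) //; last by rewrite eq_sym eneq.
    rewrite (strct u' u z) //; first by rewrite esym.
    by rewrite eq_sym eneq.
  have a1 : #|Z1| = a.
    apply: hval'; first by rewrite eneq.
    by apply/eqP => E; move: hu; rewrite -E huu'.
  pose Z2 := [set z | e u z && e y0 z] :\ p y0.
  have cl2 : forall z, z \in Z2 -> p z \in Z2.
    move=> z; rewrite !inE => /and3P [h0 h1 h2]; rewrite aut aut.
    apply/and3P; split.
    - by apply/negP => /eqP /pinj E; move: h2; rewrite E eirr.
    - apply: (strct u u' z huu' hpu h1); apply/eqP => E.
      by move: nu'y; rewrite -E esym h2.
    - apply: (strct y0 (p y0) z hy) => //; by rewrite eirr.
  have uney : u != p y0.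
    by apply/eqP => E; move: hu; rewrite E ppv esym hy.
  have c3 := cardsD1 (p y0) [set z | e u z && e y0 z].
  rewrite inE hy andbT in c3.
  have eupy : e u (p y0).
    by rewrite esym (strct y0 (p y0) u hy) // ?eirr // esym.
  rewrite eupy in c3.
  have a2 : #|[set z | e u z && e y0 z]| = a.
    apply: hval'; first by rewrite eneq.
    by apply/eqP => E; move: hu; rewrite -E huy.
  have := par Z1 cl1; have := par Z2 cl2; rewrite a1 -/Z2 => o2.
  by rewrite -a2 c3 /= o2.
have Exb := pU x xb hxb hxbc; have Exb' := pU x' xb' hxb' hxb'c.
have Eyb := pU y yb hyb hybc.
subst xb xb' yb.
have xney : x != p y by apply/eqP => E; move: hNA; rewrite E ppv esym hA.
have xny : x != y by apply/eqP => E; move: hNA; rewrite E hA.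
have hpx'x : ~~ e (p x') x by rewrite -aut esym.
have hNA' : ~~ e x' (p x').
  apply/negP => h.
  have xnpx' : x != p x'.
    by apply/eqP => E; move: hNA; rewrite E ppv esym h.
  have := strct x' (p x') x h; rewrite eirr esym hx' => /(_ isT isT xnpx') h2.
  by move: hpx'x; rewrite h2.
have x'ney : x' != p y by apply/eqP => E; move: hNA'; rewrite E ppv esym hA.
have x'ny : x' != y by apply/eqP => E; move: hNA'; rewrite E hA.
have M1 := M x x' y hNA hx' hx'b hA.
have M2 := M x' x y hNA' ltac:(by rewrite esym) hpx'x hA.
have tw : forall z, z != y -> z != p y -> e z (p y) = e z y.
  move=> z h1 h2; apply/idP/idP => h.
  - have H := strct (p y) y z; rewrite ppv in H.
    rewrite esym; apply: H => //; rewrite ?eirr // esym //.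
  - rewrite esym; apply: (strct y (p y) z hA) => //; rewrite ?eirr // esym //.
split.
  move=> hxy; have h1 := M1 hxy; split => //; rewrite tw //.
case hxy : (e x y).
- left => u v; rewrite !inE => hu hv _.
  have h1 := M1 hxy.
  case/or4P: hu => /eqP ->; case/orP: hv => /eqP ->;
    rewrite -?aut ?ppv ?tw //.
- right => u v; rewrite !inE => hu hv.
  have nx'y : e x' y = false.
    by apply/negbTE/negP => h; move: hxy; rewrite (M2 h).
  case/or4P: hu => /eqP ->; case/orP: hv => /eqP ->;
    rewrite -?aut ?ppv ?tw ?hxy ?nx'y //.
Qed.
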